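(* Let $\mathcal T$ be an orbital category. The poset $\mathrm{wIndSys}_{\mathcal T}$ is a lattice; meets are given by intersections ($(\mathcal C\wedge\mathcal D)_V=\mathcal C_V\cap\mathcal D_V$), and the join of weak indexing systems $\mathcal C,\mathcal D$ is $$\mathcal C\vee\mathcal D=\bigcup_{n\in\mathbb N}\big(\widehat{\mathrm{Cl}}_{\mathcal C}\widehat{\mathrm{Cl}}_{\mathcal D}\big)^{n}(\mathcal C\cup\mathcal D),$$ where $(\widehat{\mathrm{Cl}}_{\mathcal C}\widehat{\mathrm{Cl}}_{\mathcal D})^n$ denotes the $2n$-fold alternating composite $\widehat{\mathrm{Cl}}_{\mathcal C}\widehat{\mathrm{Cl}}_{\mathcal D}\cdots\widehat{\mathrm{Cl}}_{\mathcal C}\widehat{\mathrm{Cl}}_{\mathcal D}$.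
   Context: For a small category $\mathcal T$, $\mathbb F_{\mathcal T}$ is the full subcategory of $\mathrm{Fun}(\mathcal T^{op},\mathrm{Set})$ on finite coproducts of representables; $\mathcal T$ is orbital if $\mathbb F_{\mathcal T}$ has pullbacks. $\mathbb F_V:=\mathbb F_{\mathcal T,/V}$, $*_V$ terminal; for $U\to V$, $\mathrm{Res}^V_U$ is pullback and $\mathrm{Ind}^V_U$ postcomposition. A collection $\mathcal C$ assigns to each $V\in\mathcal T$ a class $\mathcal C_V$ of objects of $\mathbb F_V$; unions are taken pointwise. For $S\in\mathbb F_V$ with orbits $U\in\mathrm{Orb}(S)$ (each with its map $U\to V$) and $T_U\in\mathbb F_U$, $\coprod_U^ST_U:=\coprod_U\mathrm{Ind}_U^VT_U$. A full $\mathcal T$-subcategory is a collection of isomorphism-closed classes stable under restriction. A $\mathcal T$-weak indexing system is a full $\mathcal T$-subcategory $\mathcal C$ with $\mathcal C_V\neq\emptyset\Rightarrow *_V\in\mathcal C_V$ and closed under $\coprod^S_UT_U$ for $S\in\mathcal C_V$, $T_U\in\mathcal C_U$; $\mathrm{wIndSys}_{\mathcal T}$ is their poset under inclusion. For collections $\mathcal C,\mathcal E$: $\mathrm{Cl}_{\mathcal C,0}(\mathcal E)=\mathcal E$, $\mathrm{Cl}_{\mathcal C,n}(\mathcal E)_V=\{\coprod^S_UT_U\mid S\in\mathcal C_V,\ T_U\in\mathrm{Cl}_{\mathcal C,n-1}(\mathcal E)_U\ \forall U\}$, $\mathrm{Cl}_{\mathcal C}(\mathcal E)=\bigcup_n\mathrm{Cl}_{\mathcal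 C,n}(\mathcal E)$, and $\widehat{\mathrm{Cl}}_{\mathcal C}(\mathcal E):=\mathcal E\cup\mathrm{Cl}_{\mathcal C}(\mathcal E)$. *)

(* Defs.v *)
From mathcomp Require Import all_boot.
Set Implicit Arguments. Unset Strict Implicit. Unset Printing Implicit Defensive.


Record smallcat := SmallCat {
  Ob : Type;
  Hom : Ob -> Ob -> Type;
  idm : forall a, Hom a a;
  comp : forall x y z, Hom y z -> Hom x y -> Hom x z;
  comp_idl : forall a b (f : Hom a b), comp (idm b) f = f;
  comp_idr : forall a b (f : Hom a b), comp f (idm a) = f;
  compA : forall a b c d (h : Hom c d) (g : Hom b c) (f : Hom a b),
      comp h (comp g f) = comp (comp h g) f }.
Arguments idm {_} _.
Arguments comp {_ _ _ _} _ _.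

Section FT.
Variable T : smallcat.

(** * F_T : finite coproducts of representables.
    An object is a finite family of objects of T (its orbits); by Yoneda a map
    coprod_i y(X_i) -> coprod_j y(Y_j) is, for each i, a choice of j and of a
    map X_i -> Y_j in T. *)
Record FObj := FO { fidx : finType; fob : fidx -> Ob T }.

Arguments fob : clear implicits.
Definition FHom (X Y : FObj) :=
  forall i : fidx X, {j : fidx Y & Hom (fob X i) (fob Y j)}.

Definition fcomp (X Y Z : FObj) (g : FHom Y Z) (f : FHom X Y) : FHom X Z :=
  fun i => existT _ (projT1 (g (projT1 (f i))))
                    (comp (projT2 (g (projT1 (f i)))) (projT2 (f i))).

Definition fid (X : FObj) : FHom X X := fun i => existT _ i (idm (fob X i)).

Arguments fid : clear implicits.
Definition feq (X Y : FObj) (f g : FHom X Y) := forall i, f i = g i.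

Definition IsPullback (A B C P : FObj) (f : FHom A C) (g : FHom B C)
    (p1 : FHom P A) (p2 : FHom P B) : Prop :=
  feq (fcomp f p1) (fcomp g p2) /\
  forall (Q : FObj) (q1 : FHom Q A) (q2 : FHom Q B),
    feq (fcomp f q1) (fcomp g q2) ->
    exists u : FHom Q P,
      [/\ feq (fcomp p1 u) q1, feq (fcomp p2 u) q2 &
          forall u' : FHom Q P, feq (fcomp p1 u') q1 -> feq (fcomp p2 u') q2 ->
                                feq u' u].

Definition orbital : Prop :=
  forall (A B C : FObj) (f : FHom A C) (g : FHom B C),
    exists (P : FObj) (p1 : FHom P A) (p2 : FHom P B), IsPullback f g p1 p2.

Record FV (V : Ob T) := FVo {
  vidx : finType; vob : vidx -> Ob T; vstr : forall i, Hom (vob i) V }.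

Definition under (V : Ob T) (X : FV V) : FObj := FO (@vob V X).
Arguments under {V} X.

Definition sing (V : Ob T) : FObj := @FO unit (fun _ => V).

Definition strF (V : Ob T) (X : FV V) : FHom (under X) (sing V) :=
  fun i => existT (fun _ : unit => Hom (vob i) V) tt (vstr i).
Arguments strF {V} X.

Definition homF (U V : Ob T) (u : Hom U V) : FHom (sing U) (sing V) :=
  fun _ => existT (fun _ : unit => Hom U V) tt u.

Definition overV (V : Ob T) (X Y : FV V) (f : FHom (under X) (under Y)) :=
  feq (fcomp (strF Y) f) (strF X).

Definition FViso (V : Ob T) (X Y : FV V) : Prop :=
  exists (f : FHom (under X) (under Y)) (g : FHom (under Y) (under X)),
    [/\ overV f, overV g, feq (fcomp g f) (fid (under X)) & feq (fcomp f g) (fid (under Y))].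

Definition termV (V : Ob T) : FV V := @FVo V unit (fun _ => V) (fun _ => idm V).

Definition IsRes (U V : Ob T) (u : Hom U V) (X : FV V) (Y : FV U) : Prop :=
  exists p1 : FHom (under Y) (under X), IsPullback (strF X) (homF u) p1 (strF Y).

Definition Ind (U V : Ob T) (u : Hom U V) (Y : FV U) : FV V :=
  @FVo V (vidx Y) (@vob U Y) (fun i => comp u (vstr i)).

Definition bigcoprod (V : Ob T) (I : finType) (X : I -> FV V) : FV V :=
  @FVo V {i : I & vidx (X i)} (fun p => vob (projT2 p))
       (fun p => vstr (projT2 p)).

Definition coprodS (V : Ob T) (S : FV V) (Tf : forall i : vidx S, FV (vob i)) : FV V :=
  bigcoprod (fun i => Ind (vstr i) (Tf i)).

Definition Collection := forall V : Ob T, FV V -> Prop.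
Unset Implicit Arguments.

Definition unionC (C D : Collection) : Collection := fun V X => C V X \/ D V X.
Definition meetC (C D : Collection) : Collection := fun V X => C V X /\ D V X.
Definition leC (C D : Collection) : Prop := forall V X, C V X -> D V X.

Definition fullSub (C : Collection) : Prop :=
  (forall V (X Y : FV V), FViso X Y -> C V X -> C V Y) /\
  (forall U V (u : Hom U V) (X : FV V) (Y : FV U), IsRes u X Y -> C V X -> C U Y).

Definition isWIS (C : Collection) : Prop :=
  [/\ fullSub C,
      (forall V (X : FV V), C V X -> C V (termV V)) &
      (forall V (S : FV V) (Tf : forall i : vidx S, FV (vob i)),
          C V S -> (forall i, C (vob i) (Tf i)) -> C V (coprodS Tf))].

(** Cl_{C,n}(E) ; coproducts are taken up to isomorphism in F_V *)
Fixpoint Cln (C E : Collection) (n : nat) : Collection :=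
  match n with
  | 0 => E
  | n'.+1 => fun V X =>
      exists (S : FV V) (Tf : forall i : vidx S, FV (vob i)),
        [/\ C V S, (forall i, Cln C E n' (vob i) (Tf i)) & FViso X (coprodS Tf)]
  end.

Definition Cl (C E : Collection) : Collection := fun V X => exists n, Cln C E n V X.
Definition ClHat (C E : Collection) : Collection := unionC E (Cl C E).

Definition joinC (C D : Collection) : Collection :=
  fun V X => exists n : nat,
    iter n (fun E => ClHat C (ClHat D E)) (unionC C D) V X.

End FT.
Arguments unionC {T} C D V X.
Arguments meetC {T} C D V X.
Arguments leC {T} C D.
Arguments fullSub {T} C.
Arguments isWIS {T} C.
Arguments Cln {T} C E n V X.
Arguments Cl {T} C E V X.
Arguments ClHat {T} C E V X.
Arguments joinC {T} C D V X.

(* Main.v *)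
From Pilot Require Import Defs.
From mathcomp Require Import all_boot.
From Stdlib Require Import Eqdep IndefiniteDescription Setoid Morphisms.
Import Pilot.Defs.
Set Implicit Arguments. Unset Strict Implicit. Unset Printing Implicit Defensive.

Section Basics.
Variable T : smallcat.
Implicit Types X Y P Q A B : FObj T.
Implicit Types U V : Ob T.

Definition Pt (Z : Ob T) (X : FObj T) := {i : fidx X & Hom Z (fob i)}.
Definition app X Y (f : FHom X Y) (Z : Ob T) (a : Pt Z X) : Pt Z Y :=
  existT _ (projT1 (f (projT1 a))) (comp (projT2 (f (projT1 a))) (projT2 a)).

Lemma app_comp X Y Y' (g : FHom Y Y') (f : FHom X Y) Z (a : Pt Z X) :
  app (fcomp g f) a = app g (app f a).
Proof. case: a => i h; rewrite /app /fcomp /=; by rewrite compA. Qed.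

Lemma app_feq X Y (f g : FHom X Y) (H : feq f g) Z (a : Pt Z X) : app f a = app g a.
Proof. by rewrite /app (H (projT1 a)). Qed.

Lemma app_id X Z (a : Pt Z X) : app (@fid T X) a = a.
Proof. case: a => i h; by rewrite /app /fid /= comp_idl. Qed.

Lemma sig_eta (I : Type) (P : I -> Type) (s : {i : I & P i}) : existT _ (projT1 s) (projT2 s) = s.
Proof. by case: s. Qed.

Global Instance feq_equiv X Y : Equivalence (@feq T X Y).
Proof.
split.
- by move=> f i.
- by move=> f g H i; rewrite H.
- by move=> f g h H1 H2 i; rewrite H1 H2.
Qed.

Global Instance fcomp_proper X Y (W : FObj T) : Proper (@feq T _ _ ==> @feq T _ _ ==> @feq T _ _) (@fcomp T X Y W).
Proof.
move=> g g' Hg f f' Hf i; rewrite /fcomp (Hf i) (Hg (projT1 (f' i))) //.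
Qed.

Lemma fcompA X Y (Z W : FObj T) (h : FHom Z W) (g : FHom Y Z) (f : FHom X Y) :
  feq (fcomp h (fcomp g f)) (fcomp (fcomp h g) f).
Proof. move=> i. exact: (esym (app_comp h g (f i))). Qed.

Lemma fcomp_idr X Y (f : FHom X Y) : feq (fcomp f (@fid T X)) f.
Proof. move=> i; rewrite /fcomp /fid /= comp_idr; exact: sig_eta. Qed.

Lemma fcomp_idl X Y (f : FHom X Y) : feq (fcomp (@fid T Y) f) f.
Proof. move=> i; exact: (app_id (f i)). Qed.

Definition PB A B C P (f : FHom A C) (g : FHom B C) (p1 : FHom P A) (p2 : FHom P B) :=
  (forall k, app f (p1 k) = app g (p2 k)) /\
  forall Z (a : Pt Z A) (b : Pt Z B), app f a = app g b ->
    exists p : Pt Z P, [/\ app p1 p = a, app p2 p = b &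
       forall p', app p1 p' = a -> app p2 p' = b -> p' = p].

Lemma PB_iff A B C P (f : FHom A C) (g : FHom B C) (p1 : FHom P A) (p2 : FHom P B) :
  IsPullback f g p1 p2 <-> PB f g p1 p2.
Proof.
split.
- case=> Hc Hu; split; first exact: Hc.
  move=> Z a b Hab.
  have [u [H1 H2 H3]] := Hu (sing Z) (fun _ => a) (fun _ => b) (fun _ => Hab).
  exists (u tt); split; [exact: (H1 tt) | exact: (H2 tt) |].
  move=> p' H1' H2'.
  exact: (H3 (fun _ => p') (fun _ => H1') (fun _ => H2') tt).
- case=> Hc Hu; split; first exact: Hc.
  move=> Q q1 q2 Hq.
  pose u := fun x => proj1_sig (constructive_indefinite_description _ (Hu _ (q1 x) (q2 x) (Hq x))).
  have Hux : forall x, [/\ app p1 (u x) = q1 x, app p2 (u x) = q2 x &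
       forall p', app p1 p' = q1 x -> app p2 p' = q2 x -> p' = u x].
    move=> x; exact: (proj2_sig (constructive_indefinite_description _ (Hu _ (q1 x) (q2 x) (Hq x)))).
  exists u; split.
  + move=> x; by case: (Hux x).
  + move=> x; by case: (Hux x).
  + move=> u' H1 H2 x; case: (Hux x) => _ _ H; apply: H; [exact: H1 | exact: H2].
Qed.

Lemma PB_feq A B C P (f f' : FHom A C) (g g' : FHom B C) (p1 p1' : FHom P A) (p2 p2' : FHom P B) :
  feq f f' -> feq g g' -> feq p1 p1' -> feq p2 p2' -> PB f g p1 p2 -> PB f' g' p1' p2'.
Proof.
move=> Hf Hg H1 H2 [Hc Hu]; split.
- move=> k; rewrite -(H1 k) -(H2 k) -(app_feq Hf) -(app_feq Hg); exact: Hc.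
- move=> Z a b Hab.
  have [p [E1 E2 E3]] := Hu Z a b (etrans (app_feq Hf a) (etrans Hab (esym (app_feq Hg b)))).
  exists p; split.
  + by rewrite -(app_feq H1).
  + by rewrite -(app_feq H2).
  + move=> p' F1 F2; apply: E3; [by rewrite (app_feq H1) | by rewrite (app_feq H2)].
Qed.

Lemma IsPullback_feq A B C P (f f' : FHom A C) (g g' : FHom B C) (p1 p1' : FHom P A) (p2 p2' : FHom P B) :
  feq f f' -> feq g g' -> feq p1 p1' -> feq p2 p2' -> IsPullback f g p1 p2 -> IsPullback f' g' p1' p2'.
Proof. move=> *; apply/PB_iff; apply: PB_feq; eauto; exact/PB_iff. Qed.


Lemma pb_iso A B C P P' (f : FHom A C) (g : FHom B C) (p1 : FHom P A) (p2 : FHom P B)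
  (p1' : FHom P' A) (p2' : FHom P' B) :
  IsPullback f g p1 p2 -> IsPullback f g p1' p2' ->
  exists (phi : FHom P P') (psi : FHom P' P),
    [/\ feq (fcomp p1' phi) p1, feq (fcomp p2' phi) p2,
        feq (fcomp p1 psi) p1', feq (fcomp p2 psi) p2' &
        feq (fcomp psi phi) (@fid T P) /\ feq (fcomp phi psi) (@fid T P')].
Proof.
case=> Hc Hu [Hc' Hu'].
have [phi [Hf1 Hf2 _]] := Hu' P p1 p2 Hc.
have [psi [Hs1 Hs2 _]] := Hu P' p1' p2' Hc'.
have [w [_ _ Hw]] := Hu P p1 p2 Hc.
have [w' [_ _ Hw']] := Hu' P' p1' p2' Hc'.
exists phi, psi; split => //; split.
- transitivity w; [apply: Hw | symmetry; apply: Hw].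
  + by rewrite fcompA Hs1 Hf1.
  + by rewrite fcompA Hs2 Hf2.
  + exact: fcomp_idr.
  + exact: fcomp_idr.
- transitivity w'; [apply: Hw' | symmetry; apply: Hw'].
  + by rewrite fcompA Hf1 Hs1.
  + by rewrite fcompA Hf2 Hs2.
  + exact: fcomp_idr.
  + exact: fcomp_idr.
Qed.

Lemma FViso_refl V (X : FV V) : FViso X X.
Proof.
exists (@fid T _), (@fid T _); split; try exact: fcomp_idr; exact: fcomp_idl.
Qed.

Lemma FViso_sym V (X Y : FV V) : FViso X Y -> FViso Y X.
Proof. case=> f [g [H1 H2 H3 H4]]; by exists g, f. Qed.

Lemma FViso_trans V (X Y Z : FV V) : FViso X Y -> FViso Y Z -> FViso X Z.
Proof.
case=> f [g [H1 H2 H3 H4]] [f' [g' [H1' H2' H3' H4']]].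
exists (fcomp f' f), (fcomp g g'); split.
- rewrite /overV in H1 H1' *; by rewrite fcompA H1' H1.
- rewrite /overV in H2 H2' *; by rewrite fcompA H2 H2'.
- by rewrite fcompA -(fcompA g g' f') H3' fcomp_idr H3.
- by rewrite fcompA -(fcompA f' f g) H4 fcomp_idr H4'.
Qed.

Lemma IsRes_unique U V (u : Hom U V) (X : FV V) (Y Y' : FV U) :
  IsRes u X Y -> IsRes u X Y' -> FViso Y Y'.
Proof.
case=> p1 H [p1' H'].
have [phi [psi [_ H2 _ H4 [H5 H6]]]] := pb_iso H H'.
by exists phi, psi.
Qed.

Lemma IsRes_iso U V (u : Hom U V) (X X' : FV V) (Y : FV U) :
  IsRes u X Y -> FViso X X' -> IsRes u X' Y.
Proof.
case=> p1 [Hc Hu] [f [g [Hf Hg Hgf Hfg]]].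
rewrite /overV in Hf Hg.
exists (fcomp f p1); split.
- by rewrite fcompA Hf.
- move=> Q q1 q2 Hq.
  have Hq' : feq (fcomp (@strF T _ X) (fcomp g q1)) (fcomp (homF u) q2).
    by rewrite fcompA Hg.
  have [w [W1 W2 W3]] := Hu Q (fcomp g q1) q2 Hq'.
  exists w; split => //.
  + by rewrite -fcompA W1 fcompA Hfg fcomp_idl.
  + move=> w' E1 E2; apply: W3 => //.
    by rewrite -E1 fcompA fcompA Hgf fcomp_idl.
Qed.


Lemma PB_comm_pt A B C P (f : FHom A C) (g : FHom B C) (p1 : FHom P A) (p2 : FHom P B) Z (p : Pt Z P) :
  PB f g p1 p2 -> app f (app p1 p) = app g (app p2 p).
Proof. case=> Hc _; rewrite -!app_comp; apply: app_feq; exact: Hc. Qed.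

Lemma paste (S V U S' X X' : FObj T) (f : FHom S V) (g : FHom U V) (phi : FHom S' S) (sig : FHom S' U)
  (pi : FHom X S) (q : FHom X' X) (pi' : FHom X' S') :
  PB f g phi sig -> PB pi phi q pi' -> PB (fcomp f pi) g q (fcomp sig pi').
Proof.
move=> HR HL; split.
- move=> k; rewrite app_comp.
  change (app f (app pi (q k)) = app g (app sig (pi' k))).
  rewrite (HL.1 k); exact: (PB_comm_pt (pi' k) HR).
- move=> Z a b; rewrite app_comp => Hab.
  have [c [C1 C2 C3]] := HR.2 Z _ _ Hab.
  have [d [D1 D2 D3]] := HL.2 Z a c (esym C1).
  exists d; split => //.
  + by rewrite app_comp D2.
  + move=> d' E1; rewrite app_comp => E2.
    apply: D3 => //.
    apply: C3 => //.
    by rewrite -(PB_comm_pt d' HL) E1.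
Qed.

Lemma mkRes (HT : orbital T) U V (h : Hom U V) (X : FV V) : exists Y : FV U, IsRes h X Y.
Proof.
have [P [p1 [p2 H]]] := HT _ _ _ (strF (X:=X)) (homF h).
move: P p1 p2 H => [I ob] p1 p2 H.
exists (@FVo T U I ob (fun k => projT2 (p2 k))).
exists p1.
apply: (IsPullback_feq _ _ _ _ H); try reflexivity.
move=> k; rewrite /strF /=; by case: (p2 k) => [[] m].
Qed.

Definition piF V (S : FV V) (Tf : forall i : vidx S, FV (vob i)) :
  FHom (under (coprodS Tf)) (under S) :=
  fun p => existT _ (projT1 p) (@vstr T _ (Tf (projT1 p)) (projT2 p)).

Arguments piF {V S} Tf _.

Lemma pt_sing_inj Z V (a b : Hom Z V) :
  (existT _ tt a : Pt Z (sing V)) = existT _ tt b -> a = b.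
Proof. move=> E; exact: (f_equal (fun s : Pt Z (sing V) => (projT2 s : Hom Z V)) E). Qed.

Lemma sig2_inj (I : Type) (J : I -> Type) (K : forall i, J i -> Type) i j j' y y' :
  existT (fun p : {i : I & J i} => K (projT1 p) (projT2 p)) (existT J i j) y =
  existT _ (existT J i j') y' -> existT (K i) j y = existT (K i) j' y'.
Proof.
move=> E.
have E' := f_equal (fun s : {p : {i : I & J i} & K (projT1 p) (projT2 p)} =>
   existT (fun i => {j : J i & K i j}) (projT1 (projT1 s))
     (existT (K (projT1 (projT1 s))) (projT2 (projT1 s)) (projT2 s))) E.
simpl in E'. exact: (inj_pair2 _ _ _ _ _ E').
Qed.

Lemma lift_eq (I : Type) (J : I -> Type) (K : forall i, J i -> Type) i (x y : {j : J i & K i j}) :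
  x = y -> existT (fun p : {i : I & J i} => K (projT1 p) (projT2 p)) (existT J i (projT1 x)) (projT2 x)
        = existT _ (existT J i (projT1 y)) (projT2 y).
Proof. by move->. Qed.


Lemma Fib V W (S : FV V) (Tf : forall i : vidx S, FV (vob i)) (S2 : FV W)
  (phi : FHom (under S2) (under S)) (Tf2 : forall k : vidx S2, FV (vob k)) :
  (forall k, @IsRes T (vob k) (vob (projT1 (phi k))) (projT2 (phi k)) (Tf (projT1 (phi k))) (Tf2 k)) ->
  exists q : FHom (under (coprodS Tf2)) (under (coprodS Tf)), PB (piF Tf) phi q (piF Tf2).
Proof.
move=> HR.
have [rho Hrho] : exists rho : (forall k, FHom (under (Tf2 k)) (under (Tf (projT1 (phi k))))),
   forall k, PB (strF (X:=Tf (projT1 (phi k)))) (homF (projT2 (phi k))) (rho k) (strF (X:=Tf2 k)).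
  exists (fun k => proj1_sig (constructive_indefinite_description _ (HR k))).
  move=> k; apply/PB_iff; exact: (proj2_sig (constructive_indefinite_description _ (HR k))).
exists (fun p => existT (fun j : {i : vidx S & vidx (Tf i)} =>
                 Hom (@vob T _ (Tf2 (projT1 p)) (projT2 p)) (@vob T _ (Tf (projT1 j)) (projT2 j)))
           (existT _ (projT1 (phi (projT1 p))) (projT1 (rho (projT1 p) (projT2 p))))
           (projT2 (rho (projT1 p) (projT2 p)))).
split.
- move=> [k t].
  have E := (Hrho k).1 t.
  rewrite /app /= in E *.
  have E' := pt_sing_inj E.
  by rewrite E'.
- move=> Z [[i t] ha] [k hb]; rewrite /app /= => E.
  have ei := f_equal (@projT1 _ _) E. simpl in ei. subst i.
  have E2 := inj_pair2 _ _ _ _ _ E. simpl in E2.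
  have Hab : app (strF (X:=Tf (projT1 (phi k)))) (existT _ t ha : Pt Z (under (Tf (projT1 (phi k))))) =
             app (homF (projT2 (phi k))) (existT _ tt hb : Pt Z (sing _)).
    rewrite /app /=; by rewrite E2.
  have [[t2 hc] [C1 C2 C3]] := (Hrho k).2 Z _ _ Hab.
  exists (existT _ (existT _ k t2) hc); split.
  + rewrite /app /=.
    exact: (lift_eq (K := fun i j => Hom Z (@vob T _ (Tf i) j)) C1).
  + rewrite /app /=. rewrite /app /= in C2.
    by rewrite (pt_sing_inj C2).
  + move=> [[k' t'] hd] D1 D2.
    have ek := f_equal (@projT1 _ _) D2. simpl in ek. subst k'.
    have D2' := inj_pair2 _ _ _ _ _ D2. simpl in D2'.
    rewrite /app /= in D1.
    have D1' := sig2_inj (K := fun i j => Hom Z (@vob T _ (Tf i) j)) D1.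
    have := C3 (existT _ t' hd) D1'.
    move=> H; have {}H := H (f_equal (existT _ tt) D2').
    exact: (lift_eq (K := fun i j => Hom Z (@vob T _ (Tf2 i) j)) H).
Qed.


Lemma pb_of_iso A B C P (f : FHom A C) (g : FHom B C) (p1 : FHom P A) (p2 : FHom P B)
  (g' : FHom C B) :
  IsPullback f g p1 p2 -> feq (fcomp g' g) (@fid T B) -> feq (fcomp g g') (@fid T C) ->
  exists r : FHom A P, feq (fcomp p1 r) (@fid T A) /\ feq (fcomp r p1) (@fid T P).
Proof.
case=> Hc Hu H1 H2.
have Hq : feq (fcomp f (@fid T A)) (fcomp g (fcomp g' f)).
  by rewrite fcompA H2 fcomp_idl fcomp_idr.
have [r [R1 R2 _]] := Hu A (@fid T A) (fcomp g' f) Hq.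
exists r; split => //.
have [w [_ _ Hw]] := Hu P p1 p2 Hc.
transitivity w; [apply: Hw | symmetry; apply: Hw].
- by rewrite fcompA R1 fcomp_idl.
- by rewrite fcompA R2 -fcompA Hc fcompA H1 fcomp_idl.
- exact: fcomp_idr.
- exact: fcomp_idr.
Qed.

Lemma strF_coprod V (S : FV V) (Tf : forall i : vidx S, FV (vob i)) :
  feq (strF (X:=coprodS Tf)) (fcomp (strF (X:=S)) (piF Tf)).
Proof. by move=> p. Qed.

Lemma assocF V (S : FV V) (Tf : forall j : vidx S, FV (vob j))
  (Tf2 : forall p : vidx (coprodS Tf), FV (vob p)) :
  FViso (coprodS Tf2)
        (coprodS (fun j => coprodS (fun t : vidx (Tf j) => Tf2 (existT _ j t)))).
Proof.
unshelve eexists.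
  move=> [[j t] x]. exact (existT _ (existT _ j (existT _ t x)) (idm _)).
unshelve eexists.
  move=> [j [t x]]. exact (existT _ (existT _ (existT _ j t) x) (idm _)).
split.
- move=> [[j t] x]; rewrite /fcomp /= comp_idr /=; by rewrite compA.
- move=> [j [t x]]; rewrite /fcomp /= comp_idr /=; by rewrite -compA.
- move=> [[j t] x]; by rewrite /fcomp /fid /= comp_idl.
- move=> [j [t x]]; by rewrite /fcomp /fid /= comp_idl.
Qed.


Lemma choose_res (HT : orbital T) (I : Type) (W : I -> Ob T) (Vv : I -> Ob T)
  (h : forall i, Hom (W i) (Vv i)) (X : forall i, FV (Vv i)) :
  exists Y : forall i, FV (W i), forall i, IsRes (h i) (X i) (Y i).
Proof.
exists (fun i => proj1_sig (constructive_indefinite_description _ (mkRes HT (h i) (X i)))).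
move=> i; exact: (proj2_sig (constructive_indefinite_description _ (mkRes HT (h i) (X i)))).
Qed.

Lemma transport (HT : orbital T) (J : Collection T)
  (HJ : forall U V (u : Hom U V) (X : FV V) (Y : FV U), IsRes u X Y -> J V X -> J U Y)
  V (S S2 : FV V) (Tf : forall i : vidx S, FV (vob i)) :
  FViso S S2 -> (forall i, J _ (Tf i)) ->
  exists Tf2 : forall k : vidx S2, FV (vob k),
    (forall k, J _ (Tf2 k)) /\ FViso (coprodS Tf) (coprodS Tf2).
Proof.
case=> f [g [Hf Hg Hgf Hfg]] HJT.
rewrite /overV in Hf Hg.
have [Tf2 HTf2] := choose_res HT (fun k : vidx S2 => projT2 (g k)) (fun k => Tf (projT1 (g k))).
exists Tf2; split.
  move=> k; exact: (HJ _ _ _ _ _ (HTf2 k) (HJT _)).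
have [q Hq] := Fib HTf2.
have Hc : feq (fcomp (piF Tf) q) (fcomp g (piF Tf2)) := Hq.1.
have Hq' := Hq; move/PB_iff: Hq' => Hq'.
have [r [R1 R2]] := pb_of_iso Hq' Hfg Hgf.
have Hqv : feq (fcomp (strF (X:=coprodS Tf)) q) (strF (X:=coprodS Tf2)).
  by rewrite !strF_coprod -fcompA Hc fcompA Hg.
exists r, q; split => //.
rewrite /overV -Hqv -fcompA R1; exact: fcomp_idr.
Qed.

Lemma ResCoprod (HT : orbital T) U V (u : Hom U V) (S : FV V)
  (Tf : forall i : vidx S, FV (vob i)) (Y : FV U) :
  IsRes u (coprodS Tf) Y ->
  exists (S' : FV U) (Tf' : forall k : vidx S', FV (vob k)),
  [/\ IsRes u S S',
      (forall k, exists (i : vidx S) (h : Hom (vob k) (vob i)), IsRes h (Tf i) (Tf' k)) &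
      FViso Y (coprodS Tf')].
Proof.
move=> HY.
have [S' [phi Hphi]] := mkRes HT u S.
have [Tf' HTf'] := choose_res HT (fun k : vidx S' => projT2 (phi k)) (fun k => Tf (projT1 (phi k))).
have [q Hq] := Fib HTf'.
have Hphi' := Hphi; move/PB_iff: Hphi' => Hphi'.
have HP := paste Hphi' Hq.
have HR : IsRes u (coprodS Tf) (coprodS Tf').
  exists q; apply/PB_iff.
  apply: (PB_feq _ _ _ _ HP); try reflexivity; symmetry; exact: strF_coprod.
exists S', Tf'; split.
- by exists phi.
- move=> k; exists (projT1 (phi k)), (projT2 (phi k)); exact: HTf'.
- exact: IsRes_unique HY HR.
Qed.

End Basics.

Section Coll.
Variable T : smallcat.

Definition isoC (J : Collection T) := forall V (X Y : FV V), FViso X Y -> J V X -> J V Y.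
Definition resC (J : Collection T) :=
  forall U V (u : Hom U V) (X : FV V) (Y : FV U), IsRes u X Y -> J V X -> J U Y.
Definition unitC (J : Collection T) := forall V (X : FV V), J V X -> J V (termV V).
Definition coprC (J : Collection T) := forall V (S : FV V) (Tf : forall i : vidx S, FV (vob i)),
  J V S -> (forall i, J _ (Tf i)) -> J V (coprodS Tf).

Lemma Cln_iso (X E : Collection T) n : isoC E -> isoC (Cln X E n).
Proof.
case: n => [|n] HE //.
move=> V A B HAB [S [Tf [HS HTf HI]]]; exists S, Tf; split => //.
exact: FViso_trans (FViso_sym HAB) HI.
Qed.

Lemma Cln_res (HT : orbital T) (X E : Collection T) : resC X -> resC E -> forall n, resC (Cln X E n).
Proof.
move=> HX HE; elim=> [|n IH] //.
move=> U V u A B HR [S [Tf [HS HTf HI]]].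
have HR' := IsRes_iso HR HI.
have [S' [Tf' [H1 H2 H3]]] := ResCoprod HT HR'.
exists S', Tf'; split.
- exact: HX H1 HS.
- move=> k; have [i [h Hh]] := H2 k; exact: IH _ _ _ _ _ Hh (HTf i).
- exact: H3.
Qed.

Lemma ClHat_iso (X E : Collection T) : isoC E -> isoC (ClHat X E).
Proof.
move=> HE V A B HAB [H|[n H]]; [left; exact: HE HAB H | right; exists n; exact: (@Cln_iso X E n HE V A B HAB H)].
Qed.

Lemma ClHat_res (HT : orbital T) (X E : Collection T) : resC X -> resC E -> resC (ClHat X E).
Proof.
move=> HX HE U V u A B HR [H|[n H]]; [left; exact: HE HR H | right; exists n; exact: (@Cln_res HT X E HX HE n U V u A B HR H)].
Qed.

Variables C D : Collection T.

Definition stage n : Collection T := iter n (fun E => ClHat C (ClHat D E)) (unionC C D).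
Arguments stage n V X : clear implicits.

Lemma stage_iso : isoC C -> isoC D -> forall n, isoC (stage n).
Proof.
move=> HC HD; elim=> [|n IH] /=.
- move=> V A B HAB [H|H]; [left; exact: HC HAB H | right; exact: HD HAB H].
- apply: ClHat_iso; exact: ClHat_iso.
Qed.

Lemma stage_res (HT : orbital T) : resC C -> resC D -> forall n, resC (stage n).
Proof.
move=> HC HD; elim=> [|n IH] /=.
- move=> U V u A B HR [H|H]; [left; exact: HC HR H | right; exact: HD HR H].
- apply: ClHat_res => //; exact: ClHat_res.
Qed.

Lemma ClHat_unit (X E : Collection T) (P : Ob T -> Prop) :
  (forall V (Y : FV V), X V Y -> P V) -> (forall V (Y : FV V), E V Y -> P V) ->
  forall V (Y : FV V), ClHat X E V Y -> P V.
Proof.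
move=> HX HE V Y [H|[[|n] H]]; first exact: HE H; first exact: HE H.
case: H => [S [Tf [HS _ _]]]; exact: HX HS.
Qed.

Lemma stage_unit : unitC C -> unitC D -> forall n V (X : FV V), stage n V X -> unionC C D V (termV V).
Proof.
move=> HC HD; elim=> [|n IH] V X /=.
- by case=> H; [left; exact: HC H | right; exact: HD H].
- apply: (ClHat_unit (P := fun V => unionC C D V (termV V))).
  + move=> W Y H; left; exact: HC H.
  + apply: (ClHat_unit (P := fun V => unionC C D V (termV V))).
    * move=> W Y H; right; exact: HD H.
    * exact: IH.
Qed.

Lemma stage_step n V (X : FV V) : stage n V X -> stage n.+1 V X.
Proof. by move=> H; left; left. Qed.

Lemma stage_mono n m V (X : FV V) : n <= m -> stage n V X -> stage m V X.
Proof.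
move=> /subnK <-; elim: (m - n) => [|d IH] //= H.
apply: stage_step; exact: IH.
Qed.

Lemma join_fin V (S : FV V) (Tf : forall i : vidx S, FV (vob i)) :
  (forall i, joinC C D _ (Tf i)) -> exists N, forall i, stage N _ (Tf i).
Proof.
move=> H.
have [n Hn] : exists n : vidx S -> nat, forall i, stage (n i) _ (Tf i).
  exists (fun i => proj1_sig (constructive_indefinite_description _ (H i))).
  move=> i; exact: (proj2_sig (constructive_indefinite_description _ (H i))).
exists (\max_i n i) => i; apply: stage_mono (Hn i); exact: leq_bigmax.
Qed.

Definition Pj (E : Collection T) : Prop := forall V (S : FV V) (Tf : forall i : vidx S, FV (vob i)),
  E V S -> (forall i, joinC C D _ (Tf i)) -> joinC C D V (coprodS Tf).

Lemma Pj_C : Pj C.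
Proof.
move=> V S Tf HS HTf; have [N HN] := join_fin HTf.
exists N.+1; right; exists 1; exists S, Tf; split => //.
- move=> i; left; exact: HN.
- exact: FViso_refl.
Qed.

Lemma Pj_D : Pj D.
Proof.
move=> V S Tf HS HTf; have [N HN] := join_fin HTf.
exists N.+1; left; right; exists 1; exists S, Tf; split => //.
- exact: FViso_refl.
Qed.

Lemma join_iso : isoC C -> isoC D -> isoC (joinC C D).
Proof. move=> HC HD V A B HAB [n H]; exists n; exact: (stage_iso HC HD HAB H). Qed.

Lemma join_res (HT : orbital T) : resC C -> resC D -> resC (joinC C D).
Proof. move=> HC HD U V u A B HR [n H]; exists n; exact: (stage_res HT HC HD HR H). Qed.

Lemma Pj_Cln (HT : orbital T) (X E : Collection T) :
  isoC (joinC C D) -> resC (joinC C D) -> Pj X -> Pj E -> forall k, Pj (Cln X E k).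
Proof.
move=> HI HR PX PE; elim=> [|k IH] //.
move=> V S Tf [S' [Tf'' [HS' HT'' HIS]]] HTf.
have [Tf2 [HJ2 HI2]] := transport HT HR HIS HTf.
have Hin : forall j, joinC C D _ (coprodS (fun t : vidx (Tf'' j) => Tf2 (existT _ j t))).
  move=> j; apply: IH; [exact: HT'' | move=> t; exact: (HJ2 (existT _ j t))].
have Hout := PX _ S' _ HS' Hin.
apply: HI Hout.
exact: FViso_sym (FViso_trans HI2 (assocF Tf2)).
Qed.

Lemma Pj_ClHat (HT : orbital T) (X E : Collection T) :
  isoC (joinC C D) -> resC (joinC C D) -> Pj X -> Pj E -> Pj (ClHat X E).
Proof.
move=> HI HR PX PE V S Tf [H|[k H]]; first exact: PE.
exact: (Pj_Cln HT HI HR PX PE H).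
Qed.

Lemma Pj_stage (HT : orbital T) :
  isoC (joinC C D) -> resC (joinC C D) -> forall n, Pj (stage n).
Proof.
move=> HI HR; elim=> [|n IH] /=.
- move=> V S Tf [H|H]; [exact: Pj_C | exact: Pj_D].
- apply: Pj_ClHat => //; first exact: Pj_C.
  apply: Pj_ClHat => //; exact: Pj_D.
Qed.

End Coll.

Theorem mainTheorem10 (T : smallcat) (HT : orbital T) (C D : Collection T)
    (HC : isWIS C) (HD : isWIS D) :
  (isWIS (meetC C D) /\
   forall E : Collection T, isWIS E -> (leC E C /\ leC E D <-> leC E (meetC C D))) /\
  (isWIS (joinC C D) /\
   forall E : Collection T, isWIS E -> (leC C E /\ leC D E <-> leC (joinC C D) E)).
Proof.
case: HC => [[HCi HCr] HCu HCc]; case: HD => [[HDi HDr] HDu HDc].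
split; split.
- split.
  + split.
    * move=> V X Y H [h1 h2]; split; [exact: HCi H h1 | exact: HDi H h2].
    * move=> U V u X Y H [h1 h2]; split; [exact: HCr H h1 | exact: HDr H h2].
  + move=> V X [h1 h2]; split; [exact: HCu h1 | exact: HDu h2].
  + move=> V S Tf [h1 h2] HT'; split; [apply: HCc h1 _ | apply: HDc h2 _];
      move=> i; by case: (HT' i).
- move=> E _; split.
  + move=> [h1 h2] V X H; split; [exact: h1 | exact: h2].
  + move=> h; split => V X H; by case: (h V X H).
- have HI : isoC (joinC C D) := join_iso HCi HDi.
  have HR : resC (joinC C D) := join_res HT HCr HDr.
  split.
  + split; [exact: HI | exact: HR].
  + move=> V X [n H]; exists 0; exact: (stage_unit HCu HDu H).
  + move=> V S Tf [n H] HTf; exact: (Pj_stage HT HI HR H HTf).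
- move=> E [[HEi HEr] HEu HEc]; split.
  + move=> [CE DE].
    have Hle : forall (X' E' : Collection T), leC X' E -> leC E' E -> leC (ClHat X' E') E.
      move=> X' E' HX HE' V X [H|[k H]]; first exact: HE' H.
      elim: k V X H => [|k IH] V X H; first exact: HE' H.
      case: H => [S [Tf [HS HTf HI']]].
      apply: HEi (FViso_sym HI') _.
      apply: HEc; [exact: HX HS | move=> i; exact: IH (HTf i)].
    move=> V X [n H].
    elim: n V X H => [|n IH] V X /= H.
    * by case: H => H; [exact: CE H | exact: DE H].
    * apply: (Hle _ _ CE _ _ _ H); exact: Hle DE IH.
  + move=> H; split => V X HX; apply: H; exists 0; [by left | by right].
Qed.
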